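(* Let $\sigma=(a_1,\ldots,a_s)$ be a partition of $r$ with $a_1\ge\cdots\ge a_s\ge1$, and let $n\ge s$ and $q\ge a_1$ be integers. Then for every $k$ with $1\le k\le r-1$ there exists at least one $(q,k,\sigma)$-feasible sequence $(b_1,\ldots,b_n)$.
   Context: A sequence $B=(b_1,\ldots,b_n)$ of non-negative integers is $(q,k,\sigma)$-feasible if $b_1\ge b_2\ge\cdots\ge b_n$, $b_j=b_s$ for all $j\ge s$, $q\ge\max\{a_1,b_1\}$, and $\sum_{i=1}^{s}\min\{a_i,b_i\}=k$. *)

(* Defs.v *)
(* Sequences are 0-indexed: a_i = nth 0 a (i-1), b_j = nth 0 b (j-1). *)
From mathcomp Require Import all_boot.
Set Implicit Arguments. Unset Strict Implicit. Unset Printing Implicit Defensive.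

Definition is_partition (r : nat) (a : seq nat) : Prop :=
  sorted geq a /\ all (fun x => 0 < x) a /\ sumn a = r.

Definition feasible (q k : nat) (a b : seq nat) : Prop :=
  let s := size a in
  let n := size b in
  sorted geq b /\
  (forall j, s <= j <= n -> nth 0 b (j.-1) = nth 0 b (s.-1)) /\
  maxn (nth 0 a 0) (nth 0 b 0) <= q /\
  \sum_(i < s) minn (nth 0 a i) (nth 0 b i) = k.

(* Main.v *)
Require Import Defs.
From mathcomp Require Import all_boot.
From mathcomp Require Import zify.

Lemma disc_ivt (g : nat -> nat) k N :
  g 0 <= k < g N -> exists m, m < N /\ g m <= k < g m.+1.
Proof.
elim: N => [|N IH] /andP[h0 hN]; first by move: (leq_trans hN h0); rewrite ltnn.
case: (ltnP k (g N)) => hk.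
  by have [m [hm hm']] := IH (introT andP (conj h0 hk)); exists m; split => //; lia.
by exists N; split => //; apply/andP.
Qed.

Lemma sum_eq_le1 s t : \sum_(i < s) (((i : nat) == t) : nat) <= (t < s).
Proof.
elim: s => [|s IH]; first by rewrite big_ord0.
rewrite big_ord_recr /=.
case: (ltngtP t s) => h; move: IH; rewrite ?h /=; try lia.
Qed.

Definition F (a : seq nat) c t :=
  \sum_(i < size a) minn (nth 0 a i) (c + (i < t)).

Lemma F_step a c t : F a c t.+1 <= (F a c t).+1.
Proof.
rewrite /F.
apply: (@leq_trans (\sum_(i < size a) (minn (nth 0 a i) (c + (i < t)) + ((i : nat) == t)))).
  apply: leq_sum => i _; case: (ltnP i t.+1); case: (ltnP i t); case: eqP => /=; lia.
rewrite big_split /= -addn1 leq_add2l.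
by apply: leq_trans (sum_eq_le1 _ _) _; case: (_ < _).
Qed.

Theorem lemma2p6 (r : nat) (a : seq nat) (n q : nat) :
  is_partition r a ->
  size a <= n ->
  nth 0 a 0 <= q ->
  forall k, 1 <= k <= r - 1 ->
  exists b : seq nat, size b = n /\ feasible q k a b.
Proof.
move=> [srt [pos sm]] hn hq k /andP[k1 kr].
set s := size a.
have s0 : 0 < s.
  rewrite /s; move: sm kr k1; case: (a) => //= <-; lia.
have F00 : F a 0 0 = 0.
  by rewrite /F big1 // => i _; rewrite ltn0 addn0 minn0.
have Fa1 : F a (nth 0 a 0) 0 = r.
  rewrite /F -sm.
  rewrite (@eq_bigr _ _ _ _ _ _ _ (fun i : 'I_(size a) => nth 0 a i)).
    rewrite -(big_mkord xpredT (fun i => nth 0 a i)).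
    elim: (a) => [|x l IH]; first by rewrite big_nil.
    by rewrite /= big_nat_recl //= -IH.
  move=> i _; rewrite ltn0 addn0; apply/minn_idPl.
  have gt : transitive geq by move=> x y z /= h1 h2; exact: leq_trans h2 h1.
  have := sorted_leq_nth gt (fun x => leqnn x) 0 srt.
  by move=> /(_ 0 i); apply => //; rewrite inE ?ltn_ord.
have [c [hc /andP [lc uc]]] : exists c, c < nth 0 a 0 /\ F a c 0 <= k < F a c.+1 0.
  apply: disc_ivt; rewrite F00 Fa1; lia.
have Fcs : F a c.+1 0 = F a c s.
  by apply: eq_bigr => i _; rewrite ltn0 addn0 ltn_ord addn1.
rewrite Fcs in uc.
have [t [ht /andP [lt ut]]] : exists t, t < s /\ F a c t <= k < F a c t.+1.
  apply: (disc_ivt (fun t => F a c t)); by apply/andP.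
have Fk : F a c t = k by have := F_step a c t; lia.
exists (mkseq (fun j => c + (j < t)) n); split; first by rewrite size_mkseq.
split.
  rewrite sorted_map; apply: (@sub_sorted _ leq); last exact: iota_sorted.
  by move=> x y /= hxy; case: (ltnP x t); case: (ltnP y t) => //=; lia.
split.
  move=> j /andP [j1 j2]; rewrite size_mkseq in j2; rewrite /s in s0 ht *.
  rewrite !nth_mkseq; try lia.
split.
  rewrite nth_mkseq; last lia.
  by rewrite geq_max hq; case: (_ < _); lia.
rewrite -Fk; apply: eq_bigr => i _; rewrite nth_mkseq //.
by apply: leq_trans (ltn_ord i) hn.
Qed.
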